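(* Let $G$ be a group with a right-invariant metric $d$, and suppose there is a group $\tilde G\supseteq G$ (with $G$ a subgroup) carrying a right-invariant metric $\tilde d$ with $\tilde d|_G=d$, such that $(\tilde G,\tilde d)$ is voidless. Then for every closed ball $B\subset G$ and every $\sigma\in G$, $B\,\triangle\,\sigma B\subseteq\partial_tB$, where $t=d(\sigma,e)$.
   Context: Closed balls in $G$: $B_r(x)=\{y\in G:d(x,y)\le r\}$; $\tilde B_r(x)$, $\partial\tilde B_r(x)=\{y\in\tilde G:\tilde d(x,y)=r\}$ are the corresponding ball and sphere in $\tilde G$, and $\partial_tB_r(x)=\{y\in G:\tilde d(y,\partial\tilde B_r(x))\le t\}$. A metric space is voidless if for all $x$ and $r>0$, every closed ball meeting both $\{y:d(x,y)<r\}$ and $\{y:d(x,y)>r\}$ also meets $\{y:d(x,y)=r\}$. $\sigma B=\{\sigma g:g\in B\}$. *)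

(* Defs.v *)
From Stdlib Require Import Reals.
Open Scope R_scope.

Definition is_group {G : Type} (mul : G -> G -> G) (one : G) (inv : G -> G) : Prop :=
  (forall x y z, mul (mul x y) z = mul x (mul y z)) /\
  (forall x, mul one x = x) /\ (forall x, mul x one = x) /\
  (forall x, mul (inv x) x = one) /\ (forall x, mul x (inv x) = one).

Definition is_group_hom {G H : Type} (mulG : G -> G -> G) (mulH : H -> H -> H)
  (j : G -> H) : Prop := forall x y, j (mulG x y) = mulH (j x) (j y).

Definition is_metric {X : Type} (d : X -> X -> R) : Prop :=
  (forall x y, 0 <= d x y) /\
  (forall x y, d x y = 0 <-> x = y) /\
  (forall x y, d x y = d y x) /\
  (forall x y z, d x z <= d x y + d y z).

Definition right_invariant {G : Type} (mul : G -> G -> G) (d : G -> G -> R) : Prop :=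
  forall x y g, d (mul x g) (mul y g) = d x y.

Definition ball {X : Type} (d : X -> X -> R) (x : X) (r : R) : X -> Prop :=
  fun y => d x y <= r.
Definition sphere {X : Type} (d : X -> X -> R) (x : X) (r : R) : X -> Prop :=
  fun y => d x y = r.

Definition voidless {X : Type} (d : X -> X -> R) : Prop :=
  forall (x : X) (r : R), 0 < r ->
  forall (z : X) (s : R),
    (exists y, ball d z s y /\ d x y < r) ->
    (exists y, ball d z s y /\ d x y > r) ->
    (exists y, ball d z s y /\ d x y = r).

Definition is_glb (E : R -> Prop) (m : R) : Prop :=
  (forall v, E v -> m <= v) /\ (forall b, (forall v, E v -> b <= v) -> b <= m).

(* m = inf { d(y,z) : z in S }  (exists iff S nonempty; inf of empty set = +oo). *)
Definition setdist {X : Type} (d : X -> X -> R) (y : X) (S : X -> Prop) (m : R) : Prop :=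
  is_glb (fun v => exists z, S z /\ v = d y z) m.

Definition setdist_le {X : Type} (d : X -> X -> R) (y : X) (S : X -> Prop) (t : R) : Prop :=
  exists m, setdist d y S m /\ m <= t.

(* \partial_t B_r(x) = { y in G : dt(j y, \partial \tilde B_r(j x)) <= t },
   G embedded in Gt by j. *)
Definition thick_boundary {G Gt : Type} (j : G -> Gt) (dt : Gt -> Gt -> R)
  (x : G) (r t : R) : G -> Prop :=
  fun y => setdist_le dt (j y) (sphere dt (j x) r) t.

Definition left_translate {G : Type} (mul : G -> G -> G) (sigma : G) (B : G -> Prop) : G -> Prop :=
  fun y => exists g, B g /\ y = mul sigma g.

Definition symdiff {X : Type} (A B : X -> Prop) : X -> Prop :=
  fun y => (A y /\ ~ B y) \/ (B y /\ ~ A y).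

(* Main.v *)
Require Import Defs.
From Stdlib Require Import Reals Lra.
Open Scope R_scope.

Lemma glb_exists (E : R -> Prop) :
  (exists v, E v) -> (forall v, E v -> 0 <= v) -> exists m, is_glb E m.
Proof.
  intros [v0 Hv0] Hpos.
  set (F := fun u => E (- u)).
  assert (Hb : bound F).
  { exists 0. intros u Hu. unfold F in Hu. specialize (Hpos _ Hu). lra. }
  assert (Hne : exists u, F u).
  { exists (- v0). unfold F. rewrite Ropp_involutive. exact Hv0. }
  destruct (completeness F Hb Hne) as [m [Hub Hlub]].
  exists (- m). split.
  - intros v Hv. assert (F (- v)) by (unfold F; rewrite Ropp_involutive; exact Hv).
    specialize (Hub _ H). lra.
  - intros b Hb'. assert (m <= - b).
    { apply Hlub. intros u Hu. unfold F in Hu. specialize (Hb' _ Hu). lra. }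
    lra.
Qed.

Lemma sd_le {X : Type} (dt : X -> X -> R) (y : X) (S : X -> Prop) (t : R) z :
  (forall a b, 0 <= dt a b) -> S z -> dt y z <= t -> setdist_le dt y S t.
Proof.
  intros Hp Sz Hz.
  destruct (glb_exists (fun v => exists z, S z /\ v = dt y z)) as [m Hm].
  - exists (dt y z). eauto.
  - intros v [w [_ ->]]. apply Hp.
  - exists m. split; [exact Hm|]. destruct Hm as [Hm _].
    specialize (Hm (dt y z) (ex_intro _ z (conj Sz eq_refl))). lra.
Qed.

Theorem lemma4
  (G : Type) (mul : G -> G -> G) (one : G) (inv : G -> G) (d : G -> G -> R)
  (Gt : Type) (mult : Gt -> Gt -> Gt) (onet : Gt) (invt : Gt -> Gt) (dt : Gt -> Gt -> R)
  (j : G -> Gt)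
  (HG : is_group mul one inv) (Hd : is_metric d) (Hdr : right_invariant mul d)
  (HGt : is_group mult onet invt) (Hdt : is_metric dt) (Hdtr : right_invariant mult dt)
  (Hj : is_group_hom mul mult j) (Hjinj : forall x y, j x = j y -> x = y)
  (Hrestr : forall x y, dt (j x) (j y) = d x y)
  (Hvoid : voidless dt) :
  forall (x : G) (r : R), 0 <= r ->
  forall (sigma : G),
  forall y : G,
    symdiff (ball d x r) (left_translate mul sigma (ball d x r)) y ->
    thick_boundary j dt x r (d sigma one) y.
Proof.
  destruct HG as [Hass [H1l [H1r [Hinvl Hinvr]]]].
  destruct Hd as [Dpos [Dzero [Dsym Dtri]]].
  destruct Hdt as [Tpos [Tzero [Tsym Ttri]]].
  assert (Key : forall s w, d (mul s w) w = d s one).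
  { intros s w. rewrite <- (H1l w) at 2. apply Hdr. }
  intros x r Hr sigma y Hy. unfold thick_boundary.
  set (t := d sigma one).
  assert (Gen : forall a b, dt (j y) a <= t -> dt (j y) b <= t ->
             dt (j x) a <= r -> dt (j x) b > r ->
             setdist_le dt (j y) (sphere dt (j x) r) t).
  { intros a b Ha Hb Hxa Hxb.
    destruct (Rle_lt_or_eq_dec _ _ Hxa) as [Hlt|Heq].
    - assert (Hr' : 0 < r).
      { destruct (Rle_lt_or_eq_dec _ _ Hr) as [|E]; [assumption|].
        subst r. pose proof (Tpos (j x) a). lra. }
      destruct (Hvoid (j x) r Hr' (j y) t (ex_intro _ a (conj Ha Hlt))
                 (ex_intro _ b (conj Hb Hxb))) as [z [Hz1 Hz2]].
      apply sd_le with z; auto.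
    - apply sd_le with a; auto. }
  destruct Hy as [[Hin Hout] | [[g [Hg ->]] Hout]].
  - unfold ball in Hin.
    assert (Hyt : dt (j y) (j y) <= t).
    { assert (dt (j y) (j y) = 0) by (apply Tzero; reflexivity).
      pose proof (Dpos sigma one). unfold t. lra. }
    set (w := mul (inv sigma) y).
    assert (Hsw : mul sigma w = y).
    { unfold w. rewrite <- Hass, Hinvr, H1l. reflexivity. }
    apply (Gen (j y) (j w)); auto.
    + rewrite Hrestr, <- Hsw at 1. rewrite Hsw. rewrite <- Hsw at 1.
      rewrite Key. unfold t. lra.
    + rewrite Hrestr. exact Hin.
    + rewrite Hrestr. destruct (Rle_or_lt (d x w) r) as [Hle|Hgt]; [|exact Hgt].
      exfalso. apply Hout. exists w. split; [exact Hle|]. symmetry; exact Hsw.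
  - unfold ball in Hg.
    assert (Hout' : d x (mul sigma g) > r).
    { destruct (Rle_or_lt (d x (mul sigma g)) r); [|assumption].
      exfalso; apply Hout; assumption. }
    apply (Gen (j g) (j (mul sigma g))).
    + rewrite Hrestr, Key. unfold t. lra.
    + assert (dt (j (mul sigma g)) (j (mul sigma g)) = 0) by (apply Tzero; reflexivity).
      pose proof (Dpos sigma one). unfold t. lra.
    + rewrite Hrestr; exact Hg.
    + rewrite Hrestr; exact Hout'.
Qed.
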